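(* Let $X$ be a random variable with cdf $F_X$ taking values in the interval $\mathcal{I}\subseteq\mathbb{R}$, and let functions $\mathcal{I}\to\mathcal{J}$ be as described in the context. (A) Let $h_u$ have a non-decreasing upper tail with threshold $c_u$, $h_u^{\star}=\sup_{x<c_u}h_u(x)$, $\pi_{c_u}=\mathbb{P}[h_u(X)\le h_u^{\star}]$. (1) If $h_u$ is left-continuous, then $F^{-1}_{h_u(X)}(p)=h_u(F_X^{-1}(p))$ for $p>\pi_{c_u}$. (2) If $h_u$ is right-continuous, then $F^{-1+}_{h_u(X)}(p)=h_u(F_X^{-1+}(p))$ for $p\ge\pi_{c_u}$. (B) Let $g_u$ have a non-increasing upper tail with threshold $d_u$, $g_u^{\star}=\inf_{x<d_u}g_u(x)$, $\lambda_{d_u}=\mathbb{P}[g_u(X)\ge g_u^{\star}]$. (1) If $g_u$ is left-continuous, then $F^{-1+}_{g_u(X)}(p)=g_u(F_X^{-1}(1-p))$ for $p<1-\lambda_{d_u}$. (2) If $g_u$ is right-continuous, then $F^{-1}_{g_u(X)}(p)=g_u(F_X^{-1+}(1-p))$ for $p\le 1-\lambda_{d_u}$. (C) Let $h_l$ have a non-decreasing lower tail with threshold $c_l$, $h_l^{\star}=\inf_{x>c_l}h_l(x)$, $\lambda_{c_l}=\mathbb{P}[h_l(X)\ge h_l^{\star}]$. (1) If $h_l$ is left-continuous, then $F^{-1}_{h_l(X)}(p)=h_l(F_X^{-1}(p))$ for $p\le 1-\lambda_{c_l}$. (2) If $h_l$ is right-continuous, then $F^{-1+}_{h_l(X)}(p)=h_l(F_X^{-1+}(p))$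 for $p<1-\lambda_{c_l}$. (D) Let $g_l$ have a non-increasing lower tail with threshold $d_l$, $g_l^{\star}=\sup_{x>d_l}g_l(x)$, $\pi_{d_l}=\mathbb{P}[g_l(X)\le g_l^{\star}]$. (1) If $g_l$ is left-continuous, then $F^{-1+}_{g_l(X)}(p)=g_l(F_X^{-1}(1-p))$ for $p\ge\pi_{d_l}$. (2) If $g_l$ is right-continuous, then $F^{-1}_{g_l(X)}(p)=g_l(F_X^{-1+}(1-p))$ for $p>\pi_{d_l}$.
   Context: For a random variable $Y$ with cdf $F_Y$: $F_Y^{-1}(p)=\inf\{x\in\mathbb{R}: F_Y(x)\ge p\}$ (with $\inf\emptyset=+\infty$) and $F_Y^{-1+}(p)=\sup\{x\in\mathbb{R}:F_Y(x)\le p\}$ (with $\sup\emptyset=-\infty$). $\mathcal{I},\mathcal{J}\subseteq\mathbb{R}$; all functions $f:\mathcal{I}\to\mathcal{J}$ considered are real-valued and their discontinuities (if any) are jumps at which they are left- or right-continuous. Definitions: (a) $f$ has a non-decreasing upper tail if there is $x'\in\mathcal{I}$ with (1) $f(x)\le f(x')$ for all $x\in\mathcal{I}$, $x<x'$, and (2) $f(x_1)\le f(x_2)$ for all $x_1,x_2\in\mathcal{I}$ with $x'\le x_1\le x_2$; threshold $=\inf$ of the set of all such $x'$. (b) $f$ has a non-increasing upper tail if there is $x'\in\mathcal{I}$ with (1) $f(x)\ge f(x')$ for all $x\in\mathcal{I}$, $x<x'$, and (2) $f(x_1)\ge f(x_2)$ for all $x'\le x_1\le x_2$; threshold $=\inf$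 of the set of all such $x'$. (c) $f$ has a non-decreasing lower tail if there is $x'\in\mathcal{I}$ with (1) $f(x)\ge f(x')$ for all $x\in\mathcal{I}$, $x>x'$, and (2) $f(x_1)\le f(x_2)$ for all $x_1\le x_2\le x'$; threshold $=\sup$ of the set of all such $x'$. (d) $f$ has a non-increasing lower tail if there is $x'\in\mathcal{I}$ with (1) $f(x)\le f(x')$ for all $x\in\mathcal{I}$, $x>x'$, and (2) $f(x_1)\ge f(x_2)$ for all $x_1\le x_2\le x'$; threshold $=\sup$ of the set of all such $x'$. Standing assumption: in each case the set of admissible $x'$ is nonempty and the threshold lies in the open interval $(\inf\mathcal{I},\sup\mathcal{I})$. *)

(* Defs.v *)
From mathcomp Require Import all_boot all_order all_algebra.
From mathcomp Require Import all_classical all_reals all_analysis.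

Set Implicit Arguments.
Unset Strict Implicit.
Unset Printing Implicit Defensive.

Import Order.TTheory GRing.Theory Num.Theory.
Import numFieldNormedType.Exports.
Local Open Scope classical_set_scope.
Local Open Scope ring_scope.

Section Defs.
Context {R : realType}.

Definition rv_cdf {d : measure_display} {T : measurableType d}
  (P : probability T R) (Y : T -> R) (x : R) : R :=
  fine (P [set w | Y w <= x]).

(* F^{-1}(p) = inf {x in R | F x >= p}  (inf of the empty set = +oo) *)
Definition qlow (F : R -> R) (p : R) : \bar R :=
  ereal_inf (EFin @` [set x | p <= F x]).

(* F^{-1+}(p) = sup {x in R | F x <= p}  (sup of the empty set = -oo) *)
Definition qup (F : R -> R) (p : R) : \bar R :=
  ereal_sup (EFin @` [set x | F x <= p]).

Definition inf_I (I : interval R) : \bar R := ereal_inf (EFin @` [set x | x \in I]).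
Definition sup_I (I : interval R) : \bar R := ereal_sup (EFin @` [set x | x \in I]).

Definition has_left_pts (I : interval R) (x : R) := exists y, y \in I /\ y < x.
Definition has_right_pts (I : interval R) (x : R) := exists y, y \in I /\ x < y.

(* left / right continuity at x relative to the interval I (vacuous at the
   left / right endpoint of I) *)
Definition left_cont_at (I : interval R) (f : R -> R) (x : R) :=
  has_left_pts I x -> f @ x^'- --> f x.
Definition right_cont_at (I : interval R) (f : R -> R) (x : R) :=
  has_right_pts I x -> f @ x^'+ --> f x.

Definition left_cont (I : interval R) (f : R -> R) :=
  forall x, x \in I -> left_cont_at I f x.
Definition right_cont (I : interval R) (f : R -> R) :=
  forall x, x \in I -> right_cont_at I f x.

(* standing assumption on all functions I -> J: discontinuities (if any) are
   jumps (finite one-sided limits exist) at which f is left- or right-continuous *)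
Definition jump_fun (I : interval R) (f : R -> R) :=
  forall x, x \in I ->
    [/\ has_left_pts I x -> exists l : R, f @ x^'- --> l,
        has_right_pts I x -> exists l : R, f @ x^'+ --> l &
        left_cont_at I f x \/ right_cont_at I f x].

Definition ndut_adm (I : interval R) (f : R -> R) (x' : R) :=
  [/\ x' \in I,
      forall x, x \in I -> x < x' -> f x <= f x' &
      forall x1 x2, x1 \in I -> x2 \in I -> x' <= x1 -> x1 <= x2 -> f x1 <= f x2].

Definition niut_adm (I : interval R) (f : R -> R) (x' : R) :=
  [/\ x' \in I,
      forall x, x \in I -> x < x' -> f x' <= f x &
      forall x1 x2, x1 \in I -> x2 \in I -> x' <= x1 -> x1 <= x2 -> f x2 <= f x1].

Definition ndlt_adm (I : interval R) (f : R -> R) (x' : R) :=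
  [/\ x' \in I,
      forall x, x \in I -> x' < x -> f x' <= f x &
      forall x1 x2, x1 \in I -> x2 \in I -> x1 <= x2 -> x2 <= x' -> f x1 <= f x2].

Definition nilt_adm (I : interval R) (f : R -> R) (x' : R) :=
  [/\ x' \in I,
      forall x, x \in I -> x' < x -> f x <= f x' &
      forall x1 x2, x1 \in I -> x2 \in I -> x1 <= x2 -> x2 <= x' -> f x2 <= f x1].

End Defs.

(* Main.v *)
Require Import Defs.
From mathcomp Require Import all_boot all_order all_algebra.
From mathcomp Require Import all_classical all_reals all_analysis.
Import Order.TTheory GRing.Theory Num.Theory.
Import numFieldNormedType.Exports.
From mathcomp Require Import lra measurable_realfun.
Local Open Scope classical_set_scope.
Local Open Scope ring_scope.

Section S.
Context {R : realType}.
Lemma isolated_countable (A : set R) :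
  (forall a, A a -> exists2 e : R, 0 < e & forall b, A b -> `|b - a| < e -> b = a) ->
  countable A.
Proof.
move=> iso.
have H : forall a : R, exists r : rat, A a -> exists e : R, [/\ 0 < e,
   (forall b, A b -> `|b - a| < e -> b = a) & `|ratr r - a| < e / 2].
  move=> a; have [Aa|nAa] := pselect (A a); last by exists 0%Q.
  have [e e0 He] := iso a Aa.
  have [r] := @rat_in_itvoo R (a - e / 2) (a + e / 2) ltac:(lra).
  rewrite in_itv /= => /andP[r1 r2].
  exists r => _; exists e; split => //.
  rewrite ltr_norml; apply/andP; split; lra.
have [g Hg] := choice H.
apply/countable_injP; exists (fun a => choice.pickle (g a)) => a b /[!inE] Aa Ab /= /(pcan_inj choice.pickleK) gab.
have [ea [ea0 Ha ra]] := Hg a Aa.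
have [eb [eb0 Hb rb]] := Hg b Ab.
rewrite gab in ra.
have dab : `|a - b| < ea / 2 + eb / 2.
  have -> : a - b = (a - ratr (g b)) + (ratr (g b) - b) by rewrite addrA subrK.
  rewrite (le_lt_trans (ler_normD _ _)) // distrC.
  by rewrite ltrD.
have [le|le] := leP ea eb.
  apply: Hb => //; rewrite (lt_le_trans dab) //.
  by rewrite [X in _ <= X](splitr eb) lerD2r ler_pM2r.
apply: esym; apply: Ha => //; rewrite distrC (lt_le_trans dab) //.
by rewrite [X in _ <= X](splitr ea) lerD2l ler_pM2r // ltW.
Qed.
End S.

Section S2.
Context {R : realType}.
Lemma close_contra (u v l k : R) :
  `|l - u| < k / 2 -> `|l - v| < k / 2 -> k < `|u - v| -> False.
Proof.
rewrite !ltr_norml ltr_normr => /andP[a1 a2] /andP[b1 b2] /orP[]; lra.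
Qed.

Definition osc_set (I : interval R) (h : R -> R) (n : nat) : set R :=
  [set x | x \in I /\ forall d, 0 < d -> exists t, [/\ t \in I, `|t - x| < d &
     n.+1%:R^-1 < `|h t - h x|]].

Lemma osc_left (I : interval R) (h : R -> R) n a (l : R) :
  h @ a^'- --> l -> exists2 dl : R, 0 < dl &
    forall b, osc_set I h n b -> a - dl < b < a -> False.
Proof.
have k0 : 0 < n.+1%:R^-1 / 2 :> R by rewrite divr_gt0 // invr_gt0.
move=> /cvgrPdist_lt /(_ _ k0) [/= dl dl0 Hd].
exists dl => // b [bI Hb] /andP[b1 b2].
have [t [tI tb ht]] := Hb (Num.min (b - (a - dl)) (a - b)) ltac:(rewrite lt_min; apply/andP; split; lra).
move: tb; rewrite lt_min => /andP[tb1 tb2].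
have [t1 t2] : a - dl < t /\ t < a.
  by move: tb1 tb2; rewrite !ltr_norml => /andP[? ?] /andP[? ?]; split; lra.
apply: (close_contra (h t) (h b) l _ _ _ ht).
  apply: Hd => //=; rewrite ltr_norml; apply/andP; split; lra.
apply: Hd => //=; rewrite ltr_norml; apply/andP; split; lra.
Qed.

Lemma osc_right (I : interval R) (h : R -> R) n a (l : R) :
  h @ a^'+ --> l -> exists2 dr : R, 0 < dr &
    forall b, osc_set I h n b -> a < b < a + dr -> False.
Proof.
have k0 : 0 < n.+1%:R^-1 / 2 :> R by rewrite divr_gt0 // invr_gt0.
move=> /cvgrPdist_lt /(_ _ k0) [/= dl dl0 Hd].
exists dl => // b [bI Hb] /andP[b1 b2].
have [t [tI tb ht]] := Hb (Num.min (b - a) (a + dl - b)) ltac:(rewrite lt_min; apply/andP; split; lra).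
move: tb; rewrite lt_min => /andP[tb1 tb2].
have [t1 t2] : a < t /\ t < a + dl.
  by move: tb1 tb2; rewrite !ltr_norml => /andP[? ?] /andP[? ?]; split; lra.
apply: (close_contra (h t) (h b) l _ _ _ ht).
  apply: Hd => //=; rewrite ltr_norml; apply/andP; split; lra.
apply: Hd => //=; rewrite ltr_norml; apply/andP; split; lra.
Qed.

Lemma osc_set_countable (I : interval R) (h : R -> R) n :
  jump_fun I h -> countable (osc_set I h n).
Proof.
move=> hj; apply: isolated_countable => a [aI _].
have [Hl Hr _] := hj a aI.
have [dl dl0 Hdl] : exists2 dl : R, 0 < dl &
    forall b, osc_set I h n b -> a - dl < b < a -> False.
  have [hl|nhl] := pselect (has_left_pts I a).
    by have [l Hl'] := Hl hl; exact: osc_left Hl'.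
  exists 1 => // b [bI _] /andP[_ ba]; apply: nhl; by exists b.
have [dr dr0 Hdr] : exists2 dr : R, 0 < dr &
    forall b, osc_set I h n b -> a < b < a + dr -> False.
  have [hr|nhr] := pselect (has_right_pts I a).
    by have [l Hl'] := Hr hr; exact: osc_right Hl'.
  exists 1 => // b [bI _] /andP[ab _]; apply: nhr; by exists b.
exists (Num.min dl dr); first by rewrite lt_min dl0 dr0.
move=> b ob; rewrite lt_min !ltr_norml => /andP[/andP[b1 b2] /andP[b3 b4]].
have [ba|ba|//] := ltgtP b a.
  by exfalso; apply: (Hdl b ob); apply/andP; split; lra.
by exfalso; apply: (Hdr b ob); apply/andP; split; lra.
Qed.
End S2.

Section S3.
Context {R : realType}.
Lemma jump_meas_gt (I : interval R) (h : R -> R) (y : R) :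
  jump_fun I h -> measurable [set x | x \in I /\ y < h x].
Proof.
move=> hj.
pose Good := [set pd : R * R | 0 < pd.2 /\
  forall t, t \in I -> `|t - pd.1| < pd.2 -> y < h t].
pose U := \bigcup_(pd in Good) ball pd.1 pd.2.
pose S := [set x | [/\ x \in I, y < h x & ~ U x]].
have -> : [set x | x \in I /\ y < h x] = (U `&` [set` I]) `|` S.
  apply/seteqP; split => x /=.
    move=> [xI yx]; have [Ux|nUx] := pselect (U x).
      by left.
    by right.
  case=> [[[pd [pd0 Hpd] bx] xI]|[xI yx _]]; last by [].
  split => //; apply: Hpd => //.
  by move: bx; rewrite /ball /= distrC.
apply: measurableU.
  apply: measurableI; last exact: measurable_itv.
  apply: open_measurable; apply: bigcup_open => pd _; exact: ball_open.
apply: countable_measurable; first exact: measurable_set1.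
apply: (@sub_countable _ _ _ (\bigcup_(n in [set: nat]) osc_set I h n)).
  apply: subset_card_le => x [xI yx nUx].
  set ep := h x - y.
  have ep0 : 0 < ep by rewrite subr_gt0.
  exists (Num.truncn (ep^-1)) => //; split => // d d0.
  have : ~ Good (x, d) by move=> G; apply: nUx; exists (x, d) => //=; rewrite /ball /= subrr normr0.
  move=> /not_andP [//|] /existsNP [t] /not_implyP [tI] /not_implyP [tx] /negP.
  rewrite -leNgt => hty.
  exists t; split => //.
  have h1 := Num.Theory.truncnS_gt (ep^-1).
  have h2 : (Num.truncn ep^-1).+1%:R^-1 < ep.
    by rewrite invf_plt ?posrE.
  rewrite (lt_le_trans h2) // distrC (le_trans _ (ler_norm _)) // /ep; lra.
apply: bigcup_countable => // n _; exact: osc_set_countable.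
Qed.
End S3.

Section Prob.
Context {R : realType} {d : measure_display} {T : measurableType d}.
Variables (P : probability T R) (X : T -> R).
Hypothesis mX : measurable_fun setT X.

Definition Pr (A : set T) : R := fine (P A).

Lemma PrE A : measurable A -> P A = (Pr A)%:E.
Proof. by move=> mA; rewrite /Pr fineK // fin_num_measure. Qed.

Lemma Pr_ge0 A : 0 <= Pr A.
Proof. by rewrite /Pr fine_ge0. Qed.

Lemma Pr_le1 A : measurable A -> Pr A <= 1.
Proof. by move=> mA; rewrite -lee_fin -PrE // probability_le1. Qed.

Lemma Pr_mono A B : measurable A -> measurable B -> A `<=` B -> Pr A <= Pr B.
Proof. by move=> mA mB AB; rewrite -lee_fin -!PrE // le_measure // inE. Qed.

Lemma Pr_setC A : measurable A -> Pr (~` A) = 1 - Pr A.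
Proof.
move=> mA; have := probability_setC P mA; rewrite PrE ?PrE //; last exact: measurableC.
by move=> [].
Qed.

Lemma Pr_setT : Pr setT = 1.
Proof. by rewrite /Pr probability_setT. Qed.

Lemma Pr_set0 : Pr set0 = 0.
Proof. by rewrite /Pr measure0. Qed.

Lemma Pr_eq A B : A = B -> Pr A = Pr B.
Proof. by move=> ->. Qed.

Lemma measX_le x : measurable [set w | X w <= x].
Proof.
rewrite (_ : [set w | X w <= x] = setT `&` X @^-1` [set` `]-oo, x]]).
  apply: mX => //; exact: measurable_itv.
by rewrite setTI; apply/seteqP; split => w; rewrite /= in_itv /=.
Qed.

Lemma measX_lt x : measurable [set w | X w < x].
Proof.
rewrite (_ : [set w | X w < x] = setT `&` X @^-1` [set` `]-oo, x[]).
  apply: mX => //; exact: measurable_itv.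
by rewrite setTI; apply/seteqP; split => w; rewrite /= in_itv /=.
Qed.

Lemma measX_gt x : measurable [set w | x < X w].
Proof.
rewrite (_ : [set w | x < X w] = setT `&` X @^-1` [set` `]x, +oo[]).
  apply: mX => //; exact: measurable_itv.
by rewrite setTI; apply/seteqP; split => w; rewrite /= in_itv /= andbT.
Qed.

Lemma measX_ge x : measurable [set w | x <= X w].
Proof.
rewrite (_ : [set w | x <= X w] = setT `&` X @^-1` [set` `[x, +oo[]).
  apply: mX => //; exact: measurable_itv.
by rewrite setTI; apply/seteqP; split => w; rewrite /= in_itv /= andbT.
Qed.

Lemma cdfE x : rv_cdf P X x = Pr [set w | X w <= x].
Proof. by []. Qed.

Lemma Pr_gt x : Pr [set w | x < X w] = 1 - rv_cdf P X x.
Proof.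
rewrite cdfE -Pr_setC; last exact: measX_le.
by congr Pr; apply/seteqP; split => w /=; rewrite ltNge => /negP.
Qed.

Lemma Pr_ge x : Pr [set w | x <= X w] = 1 - Pr [set w | X w < x].
Proof.
rewrite -Pr_setC; last exact: measX_lt.
by congr Pr; apply/seteqP; split => w /=; rewrite leNgt => /negP.
Qed.

Lemma cdf_mono x y : x <= y -> rv_cdf P X x <= rv_cdf P X y.
Proof.
move=> xy; apply: Pr_mono; [exact: measX_le|exact: measX_le|].
by move=> w /= /le_trans; apply.
Qed.

Lemma cdf_left q p : (forall x, x < q -> rv_cdf P X x <= p) ->
  Pr [set w | X w < q] <= p.
Proof.
move=> H.
pose E n := [set w | X w <= q - n.+1%:R^-1].
have mE n : measurable (E n) by exact: measX_le.
have UE : \bigcup_n E n = [set w | X w < q].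
  apply/seteqP; split => w /=.
    move=> [n _]; rewrite /E /= => /le_lt_trans; apply.
    by rewrite ltrBlDr ltrDl invr_gt0.
  move=> wq; have e0 : 0 < q - X w by rewrite subr_gt0.
  exists (Num.truncn ((q - X w)^-1)) => //; rewrite /E /=.
  have h1 := Num.Theory.truncnS_gt ((q - X w)^-1).
  have h2 : (Num.truncn (q - X w)^-1).+1%:R^-1 < q - X w.
    by rewrite invf_plt ?posrE.
  move: h2; set k := (_.+1%:R^-1); move=> h2; lra.
have := @nondecreasing_cvg_mu _ _ _ P E mE; rewrite UE => /(_ (measX_lt q)).
move=> /(_ _) cv.
have : (P [set w | (X w < q)%R] <= p%:E)%E.
  apply: (cvge_to_le (cv _)).
    move=> m n mn; apply/subsetPset => w; rewrite /E /= => /le_trans; apply.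
    rewrite lerD2l lerN2 lef_pV2 ?posrE // ler_nat; by [].
  apply: nearW => n /=; rewrite PrE // lee_fin; apply: H.
  by rewrite ltrBlDr ltrDl invr_gt0.
by rewrite PrE ?lee_fin //; exact: measX_lt.
Qed.

Lemma cdf_right q p : (forall x, q < x -> p <= rv_cdf P X x) ->
  p <= rv_cdf P X q.
Proof.
move=> H.
pose E n := [set w | X w <= q + n.+1%:R^-1].
have mE n : measurable (E n) by exact: measX_le.
have UE : \bigcap_n E n = [set w | X w <= q].
  apply/seteqP; split => w /=; last first.
    move=> wq n _; rewrite /E /= (le_trans wq) // lerDl invr_ge0 //.
  move=> Hw; rewrite leNgt; apply/negP => wq.
  have e0 : 0 < X w - q by rewrite subr_gt0.
  have := Hw (Num.truncn ((X w - q)^-1)) I; rewrite /E /=.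
  have h1 := Num.Theory.truncnS_gt ((X w - q)^-1).
  have h2 : (Num.truncn (X w - q)^-1).+1%:R^-1 < X w - q.
    by rewrite invf_plt ?posrE.
  move: h2; set k := (_.+1%:R^-1); move=> h2; lra.
have := @nonincreasing_cvg_mu _ _ _ P E; rewrite UE.
move=> /(_ _ mE (measX_le q)) cv.
have : (p%:E <= P [set w | (X w <= q)%R])%E.
  apply: (cvge_to_ge (cv _ _)).
  - exact: (le_lt_trans (probability_le1 P (mE 0%N)) (ltry _)).
  - move=> m n mn; apply/subsetPset => w; rewrite /E /= => /le_trans; apply.
    rewrite lerD2l lef_pV2 ?posrE // ler_nat; by [].
  apply: nearW => n /=; rewrite PrE // lee_fin; apply: H.
  by rewrite ltrDl invr_gt0.
by rewrite PrE ?lee_fin //; exact: measX_le.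
Qed.

End Prob.

Section Quant.
Context {R : realType}.

Lemma qlow_char (G : R -> R) p v : p <= G v -> (forall y, y < v -> G y < p) ->
  qlow G p = v%:E.
Proof.
move=> Gv Hy; apply/eqP; rewrite eq_le; apply/andP; split.
  by apply: ge_ereal_inf; exists v%:E => //; exists v.
apply: le_ereal_inf_tmp => _ [y /= py <-]; rewrite lee_fin leNgt; apply/negP.
by move=> /Hy; rewrite ltNge py.
Qed.

Lemma qup_char (G : R -> R) p v : (forall y, y < v -> G y <= p) ->
  (forall y, v < y -> p < G y) -> qup G p = v%:E.
Proof.
move=> Hl Hr.
have ub : (qup G p <= v%:E)%E.
  apply: ge_ereal_sup => _ [y /= py <-]; rewrite lee_fin leNgt; apply/negP.
  by move=> /Hr; rewrite ltNge py.
have lb : ((v - 1)%:E <= qup G p)%E.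
  apply: le_ereal_sup_tmp; exists (v - 1)%:E => //; exists (v - 1) => //.
  by apply: Hl; rewrite ltrBlDr ltrDl.
have : qup G p \is a fin_num.
  by rewrite fin_numE; apply/andP; split; apply/eqP => e; move: ub lb; rewrite e.
move=> /fineK e; rewrite -e in ub lb *; congr EFin; apply/eqP; rewrite eq_le.
rewrite -lee_fin ub /=; rewrite leNgt; apply/negP => sv.
set s := fine (qup G p) in sv e.
have : (((s + v) / 2)%:E <= s%:E)%E.
  rewrite e; apply: le_ereal_sup_tmp; exists ((s + v) / 2)%:E => //.
  exists ((s + v) / 2) => //; apply: Hl; lra.
rewrite lee_fin; lra.
Qed.

Variables (d : measure_display) (T : measurableType d).
Variables (P : probability T R) (X : T -> R).
Hypothesis mX : measurable_fun setT X.

Local Notation F := (rv_cdf P X).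

Lemma cdf_lim_low p : 0 < p -> exists x, F x < p.
Proof.
move=> p0; apply/not_existsP => H.
have H' x : p <= F x by rewrite leNgt; apply/negP; exact: H.
pose E n := [set w | X w <= - n%:R].
have mE n : measurable (E n) by exact: measX_le.
have UE : \bigcap_n E n = set0.
  apply/seteqP; split => w //= Hw.
  have := Hw (Num.truncn (- X w)).+1 I; rewrite /E /=.
  have h1 := Num.Theory.truncnS_gt (- X w).
  move: h1; set k := (_.+1%:R); move=> h1; lra.
have := @nonincreasing_cvg_mu _ _ _ P E; rewrite UE measure0.
move=> /(_ _ mE measurable0) cv.
have : (p%:E <= 0)%E.
  apply: (cvge_to_ge (cv _ _)).
  - exact: (le_lt_trans (probability_le1 P (mE 0%N)) (ltry _)).
  - move=> m n mn; apply/subsetPset => w; rewrite /E /= => /le_trans; apply.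
    by rewrite lerN2 ler_nat.
  apply: nearW => n /=; rewrite (PrE P _ (mE n)) lee_fin; exact: H'.
by rewrite lee_fin leNgt p0.
Qed.

Lemma cdf_lim_high p : p < 1 -> exists x, p < F x.
Proof.
move=> p1; apply/not_existsP => H.
have H' x : F x <= p by rewrite leNgt; apply/negP; exact: H.
pose E n := [set w | X w <= n%:R].
have mE n : measurable (E n) by exact: measX_le.
have UE : \bigcup_n E n = setT.
  apply/seteqP; split => w //= _.
  exists (Num.truncn (X w)).+1 => //; rewrite /E /=.
  have h1 := Num.Theory.truncnS_gt (X w).
  move: h1; set k := (_.+1%:R); move=> h1; lra.
have := @nondecreasing_cvg_mu _ _ _ P E mE; rewrite UE.
move=> /(_ measurableT) cv.
have : (P setT <= p%:E)%E.
  apply: (cvge_to_le (cv _)).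
    move=> m n mn; apply/subsetPset => w; rewrite /E /= => /le_trans; apply.
    by rewrite ler_nat.
  apply: nearW => n /=; rewrite (PrE P _ (mE n)) lee_fin; exact: H'.
by rewrite probability_setT lee_fin leNgt p1.
Qed.

Lemma qlow_ex p : 0 < p < 1 -> exists q, [/\ qlow F p = q%:E, p <= F q &
  forall x, x < q -> F x < p].
Proof.
move=> /andP[p0 p1].
have [x0 Hx0] := cdf_lim_low p p0.
have [x1 Hx1] := cdf_lim_high p p1.
set S := [set x | p <= F x].
have lbS : lbound S x0.
  move=> s Ss; rewrite leNgt; apply/negP => sx.
  by have := le_lt_trans (le_trans Ss (cdf_mono P X mX _ _ (ltW sx))) Hx0; rewrite ltxx.
have neS : S !=set0 by exists x1; exact: ltW.
have e : qlow F p = (inf S)%:E by rewrite /qlow ereal_inf_EFin //; exists x0.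
exists (inf S); split => //.
  apply: (cdf_right P X mX) => // x qx.
  have [s Ss sx] := inf_lt neS qx.
  exact: (le_trans Ss (cdf_mono P X mX _ _ (ltW sx))).
move=> x xq; rewrite ltNge; apply/negP => Sx.
have := ge_inf (ex_intro _ x0 lbS) Sx.
by rewrite leNgt xq.
Qed.

Lemma qup_ex p : 0 < p < 1 -> exists q, [/\ qup F p = q%:E,
  forall x, x < q -> F x <= p & forall x, q < x -> p < F x].
Proof.
move=> /andP[p0 p1].
have [x0 Hx0] := cdf_lim_low p p0.
have [x1 Hx1] := cdf_lim_high p p1.
set S := [set x | F x <= p].
have ubS : ubound S x1.
  move=> s Ss; rewrite leNgt; apply/negP => sx.
  by have := lt_le_trans Hx1 (le_trans (cdf_mono P X mX _ _ (ltW sx)) Ss); rewrite ltxx.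
have neS : S !=set0 by exists x0; exact: ltW.
have e : qup F p = (sup S)%:E by rewrite /qup ereal_sup_EFin //; exists x1.
exists (sup S); split => //.
  move=> x xq; have [s Ss sx] := sup_gt neS xq.
  exact: (le_trans (cdf_mono P X mX _ _ (ltW sx)) Ss).
move=> x qx; rewrite ltNge; apply/negP => Sx.
have := ub_le_sup (ex_intro _ x1 ubS) Sx.
by rewrite leNgt qx.
Qed.

End Quant.

Section Helpers.
Context {R : realType}.

Lemma itv_conv (I : interval R) a b x : a \in I -> b \in I -> a <= x -> x <= b -> x \in I.
Proof.
move=> aI bI ax xb.
by have := @interval_is_interval R I a b aI bI x; apply; rewrite ax xb.
Qed.

Arguments itv_conv {I a b x}.

Lemma itv_interior (I : interval R) c : (inf_I I < c%:E)%E -> (c%:E < sup_I I)%E ->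
  [/\ c \in I, has_left_pts I c & has_right_pts I c].
Proof.
move=> /ereal_inf_lt [_ [a aI <-]] ac /ereal_sup_gt [_ [b bI <-]] cb.
rewrite lte_fin in ac; rewrite lte_fin in cb.
have aI' : a \in I := aI.
have bI' : b \in I := bI.
have hl : has_left_pts I c by exists a.
have hr : has_right_pts I c by exists b.
by split => //; apply: (itv_conv aI' bI'); apply: ltW.
Qed.

Lemma right_near (f : R -> R) c L eps : f @ c^'+ --> L -> 0 < eps ->
  exists2 e, 0 < e & forall s, c < s < c + e -> `|L - f s| < eps.
Proof.
move=> /cvgrPdist_lt /(_ eps) H /H [/= e e0 He]; exists e => // s /andP[s1 s2].
apply: He => //=; rewrite ltr_norml; apply/andP; split; lra.
Qed.

Lemma left_near (f : R -> R) c L eps : f @ c^'- --> L -> 0 < eps ->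
  exists2 e, 0 < e & forall s, c - e < s < c -> `|L - f s| < eps.
Proof.
move=> /cvgrPdist_lt /(_ eps) H /H [/= e e0 He]; exists e => // s /andP[s1 s2].
apply: He => //=; rewrite ltr_norml; apply/andP; split; lra.
Qed.

Arguments right_near {f c L eps}.
Arguments left_near {f c L eps}.

Lemma right_lim_le (f : R -> R) c L b v : f @ c^'+ --> L -> c < b ->
  (forall s, c < s < b -> f s <= v) -> L <= v.
Proof.
move=> cv cb H; rewrite leNgt; apply/negP => vL.
have [e e0 He] := right_near cv (ltac:(rewrite subr_gt0; exact: vL) : 0 < L - v).
pose s := c + Num.min e (b - c) / 2.
have m0 : 0 < Num.min e (b - c) by rewrite lt_min e0 subr_gt0.
have m1 : Num.min e (b - c) <= e by rewrite ge_min lexx.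
have m2 : Num.min e (b - c) <= b - c by rewrite ge_min lexx orbT.
have := He s ltac:(apply/andP; split; rewrite /s; lra).
have := H s ltac:(apply/andP; split; rewrite /s; lra).
rewrite ltr_norml; move=> ? /andP[? ?]; lra.
Qed.

Lemma right_lim_ge (f : R -> R) c L b v : f @ c^'+ --> L -> c < b ->
  (forall s, c < s < b -> v <= f s) -> v <= L.
Proof.
move=> cv cb H; rewrite leNgt; apply/negP => vL.
have [e e0 He] := right_near cv (ltac:(rewrite subr_gt0; exact: vL) : 0 < v - L).
pose s := c + Num.min e (b - c) / 2.
have m0 : 0 < Num.min e (b - c) by rewrite lt_min e0 subr_gt0.
have m1 : Num.min e (b - c) <= e by rewrite ge_min lexx.
have m2 : Num.min e (b - c) <= b - c by rewrite ge_min lexx orbT.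
have := He s ltac:(apply/andP; split; rewrite /s; lra).
have := H s ltac:(apply/andP; split; rewrite /s; lra).
rewrite ltr_norml; move=> ? /andP[? ?]; lra.
Qed.

Lemma left_lim_le (f : R -> R) c L a v : f @ c^'- --> L -> a < c ->
  (forall s, a < s < c -> f s <= v) -> L <= v.
Proof.
move=> cv cb H; rewrite leNgt; apply/negP => vL.
have [e e0 He] := left_near cv (ltac:(rewrite subr_gt0; exact: vL) : 0 < L - v).
pose s := c - Num.min e (c - a) / 2.
have m0 : 0 < Num.min e (c - a) by rewrite lt_min e0 subr_gt0.
have m1 : Num.min e (c - a) <= e by rewrite ge_min lexx.
have m2 : Num.min e (c - a) <= c - a by rewrite ge_min lexx orbT.
have := He s ltac:(apply/andP; split; rewrite /s; lra).
have := H s ltac:(apply/andP; split; rewrite /s; lra).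
rewrite ltr_norml; move=> ? /andP[? ?]; lra.
Qed.

Lemma left_lim_ge (f : R -> R) c L a v : f @ c^'- --> L -> a < c ->
  (forall s, a < s < c -> v <= f s) -> v <= L.
Proof.
move=> cv cb H; rewrite leNgt; apply/negP => vL.
have [e e0 He] := left_near cv (ltac:(rewrite subr_gt0; exact: vL) : 0 < v - L).
pose s := c - Num.min e (c - a) / 2.
have m0 : 0 < Num.min e (c - a) by rewrite lt_min e0 subr_gt0.
have m1 : Num.min e (c - a) <= e by rewrite ge_min lexx.
have m2 : Num.min e (c - a) <= c - a by rewrite ge_min lexx orbT.
have := He s ltac:(apply/andP; split; rewrite /s; lra).
have := H s ltac:(apply/andP; split; rewrite /s; lra).
rewrite ltr_norml; move=> ? /andP[? ?]; lra.
Qed.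

Lemma right_gt (f : R -> R) c y : f @ c^'+ --> f c -> y < f c ->
  exists2 b, c < b & forall s, c < s <= b -> y < f s.
Proof.
move=> cv yc; have [e e0 He] := right_near cv (ltac:(rewrite subr_gt0; exact: yc) : 0 < f c - y).
exists (c + e / 2); first lra.
move=> s /andP[s1 s2]; have := He s ltac:(apply/andP; split; lra).
rewrite ltr_norml => /andP[? ?]; lra.
Qed.

Lemma right_lt (f : R -> R) c y : f @ c^'+ --> f c -> f c < y ->
  exists2 b, c < b & forall s, c < s <= b -> f s < y.
Proof.
move=> cv yc; have [e e0 He] := right_near cv (ltac:(rewrite subr_gt0; exact: yc) : 0 < y - f c).
exists (c + e / 2); first lra.
move=> s /andP[s1 s2]; have := He s ltac:(apply/andP; split; lra).
rewrite ltr_norml => /andP[? ?]; lra.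
Qed.

Lemma left_gt (f : R -> R) c y : f @ c^'- --> f c -> y < f c ->
  exists2 a, a < c & forall s, a <= s < c -> y < f s.
Proof.
move=> cv yc; have [e e0 He] := left_near cv (ltac:(rewrite subr_gt0; exact: yc) : 0 < f c - y).
exists (c - e / 2); first lra.
move=> s /andP[s1 s2]; have := He s ltac:(apply/andP; split; lra).
rewrite ltr_norml => /andP[? ?]; lra.
Qed.

Lemma left_lt (f : R -> R) c y : f @ c^'- --> f c -> f c < y ->
  exists2 a, a < c & forall s, a <= s < c -> f s < y.
Proof.
move=> cv yc; have [e e0 He] := left_near cv (ltac:(rewrite subr_gt0; exact: yc) : 0 < y - f c).
exists (c - e / 2); first lra.
move=> s /andP[s1 s2]; have := He s ltac:(apply/andP; split; lra).
rewrite ltr_norml => /andP[? ?]; lra.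
Qed.

End Helpers.
Arguments right_lim_le {R f c L b v}.
Arguments right_lim_ge {R f c L b v}.
Arguments left_lim_le {R f c L a v}.
Arguments left_lim_ge {R f c L a v}.
Arguments right_gt {R f c y}.
Arguments right_lt {R f c y}.
Arguments left_gt {R f c y}.
Arguments left_lt {R f c y}.
Arguments itv_conv {R I a b x}.

Section Adm.
Context {R : realType}.
Variables (I : interval R) (h : R -> R).

Lemma ndut_up x0 x : ndut_adm I h x0 -> x \in I -> x0 <= x -> ndut_adm I h x.
Proof.
move=> [x0I H1 H2] xI x0x; split => //.
  move=> t tI tx; have [tx0|x0t] := ltP t x0.
    exact: le_trans (H1 t tI tx0) (H2 x0 x x0I xI (lexx _) x0x).
  exact: H2 t x tI xI x0t (ltW tx).
move=> x1 x2 x1I x2I xx1 x12; apply: H2 => //; exact: le_trans x0x xx1.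
Qed.

Lemma niut_up x0 x : niut_adm I h x0 -> x \in I -> x0 <= x -> niut_adm I h x.
Proof.
move=> [x0I H1 H2] xI x0x; split => //.
  move=> t tI tx; have [tx0|x0t] := ltP t x0.
    exact: le_trans (H2 x0 x x0I xI (lexx _) x0x) (H1 t tI tx0).
  exact: H2 t x tI xI x0t (ltW tx).
move=> x1 x2 x1I x2I xx1 x12; apply: H2 => //; exact: le_trans x0x xx1.
Qed.

Lemma ndlt_down x0 x : ndlt_adm I h x0 -> x \in I -> x <= x0 -> ndlt_adm I h x.
Proof.
move=> [x0I H1 H2] xI xx0; split => //.
  move=> t tI xt; have [x0t|tx0] := ltP x0 t.
    exact: le_trans (H2 x x0 xI x0I xx0 (lexx _)) (H1 t tI x0t).
  exact: H2 x t xI tI (ltW xt) tx0.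
move=> x1 x2 x1I x2I x12 x2x; apply: H2 => //; exact: le_trans x2x xx0.
Qed.

Lemma nilt_down x0 x : nilt_adm I h x0 -> x \in I -> x <= x0 -> nilt_adm I h x.
Proof.
move=> [x0I H1 H2] xI xx0; split => //.
  move=> t tI xt; have [x0t|tx0] := ltP x0 t.
    exact: le_trans (H1 t tI x0t) (H2 x x0 xI x0I xx0 (lexx _)).
  exact: H2 x t xI tI (ltW xt) tx0.
move=> x1 x2 x1I x2I x12 x2x; apply: H2 => //; exact: le_trans x2x xx0.
Qed.

Lemma ndut_inf c x : c%:E = ereal_inf (EFin @` [set x' | ndut_adm I h x']) ->
  x \in I -> c < x -> ndut_adm I h x.
Proof.
move=> ce xI cx; have := cx; rewrite -lte_fin ce => /ereal_inf_lt [_ [x0 ax0 <-]].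
rewrite lte_fin => x0x; exact: ndut_up ax0 xI (ltW x0x).
Qed.

Lemma niut_inf c x : c%:E = ereal_inf (EFin @` [set x' | niut_adm I h x']) ->
  x \in I -> c < x -> niut_adm I h x.
Proof.
move=> ce xI cx; have := cx; rewrite -lte_fin ce => /ereal_inf_lt [_ [x0 ax0 <-]].
rewrite lte_fin => x0x; exact: niut_up ax0 xI (ltW x0x).
Qed.

Lemma ndlt_sup c x : c%:E = ereal_sup (EFin @` [set x' | ndlt_adm I h x']) ->
  x \in I -> x < c -> ndlt_adm I h x.
Proof.
move=> ce xI cx; have := cx; rewrite -lte_fin ce => /ereal_sup_gt [_ [x0 ax0 <-]].
rewrite lte_fin => x0x; exact: ndlt_down ax0 xI (ltW x0x).
Qed.

Lemma nilt_sup c x : c%:E = ereal_sup (EFin @` [set x' | nilt_adm I h x']) ->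
  x \in I -> x < c -> nilt_adm I h x.
Proof.
move=> ce xI cx; have := cx; rewrite -lte_fin ce => /ereal_sup_gt [_ [x0 ax0 <-]].
rewrite lte_fin => x0x; exact: nilt_down ax0 xI (ltW x0x).
Qed.

Lemma ndut_c_right c : c \in I -> has_right_pts I c -> right_cont_at I h c ->
  (forall x, x \in I -> c < x -> ndut_adm I h x) -> ndut_adm I h c.
Proof.
move=> cI hr rc adm; have cv := rc hr; have [b [bI cb]] := hr.
split => //.
  move=> t tI tc; apply: (right_lim_ge cv cb) => s /andP[cs sb].
  have sI : s \in I by apply: (itv_conv cI bI); apply: ltW.
  by have [_ H1 _] := adm s sI cs; apply: H1 => //; exact: lt_trans tc cs.
move=> x1 x2 x1I x2I cx1 x12.
have [cx1'|x1c] := ltP c x1.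
  by have [_ _ H2] := adm x1 x1I cx1'; exact: H2.
have e1 : x1 = c by apply/eqP; rewrite eq_le x1c cx1.
rewrite e1 in x12 *.
have [cx2|x2c] := ltP c x2; last first.
  by have -> : x2 = c by apply/eqP; rewrite eq_le x2c x12.
apply: (right_lim_le cv cx2) => s /andP[cs sx2].
have sI : s \in I by apply: (itv_conv cI x2I); apply: ltW.
have [_ _ H2] := adm s sI cs; exact: H2 s x2 sI x2I (lexx s) (ltW sx2).
Qed.

Lemma niut_c_right c : c \in I -> has_right_pts I c -> right_cont_at I h c ->
  (forall x, x \in I -> c < x -> niut_adm I h x) -> niut_adm I h c.
Proof.
move=> cI hr rc adm; have cv := rc hr; have [b [bI cb]] := hr.
split => //.
  move=> t tI tc; apply: (right_lim_le cv cb) => s /andP[cs sb].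
  have sI : s \in I by apply: (itv_conv cI bI); apply: ltW.
  by have [_ H1 _] := adm s sI cs; apply: H1 => //; exact: lt_trans tc cs.
move=> x1 x2 x1I x2I cx1 x12.
have [cx1'|x1c] := ltP c x1.
  by have [_ _ H2] := adm x1 x1I cx1'; exact: H2.
have e1 : x1 = c by apply/eqP; rewrite eq_le x1c cx1.
rewrite e1 in x12 *.
have [cx2|x2c] := ltP c x2; last first.
  by have -> : x2 = c by apply/eqP; rewrite eq_le x2c x12.
apply: (right_lim_ge cv cx2) => s /andP[cs sx2].
have sI : s \in I by apply: (itv_conv cI x2I); apply: ltW.
have [_ _ H2] := adm s sI cs; exact: H2 s x2 sI x2I (lexx s) (ltW sx2).
Qed.

Lemma ndlt_c_left c : c \in I -> has_left_pts I c -> left_cont_at I h c ->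
  (forall x, x \in I -> x < c -> ndlt_adm I h x) -> ndlt_adm I h c.
Proof.
move=> cI hl lc adm; have cv := lc hl; have [a [aI ac]] := hl.
split => //.
  move=> t tI ct; apply: (left_lim_le cv ac) => s /andP[aS sc].
  have sI : s \in I by apply: (itv_conv aI cI); apply: ltW.
  by have [_ H1 _] := adm s sI sc; apply: H1 => //; exact: lt_trans sc ct.
move=> x1 x2 x1I x2I x12 x2c.
have [x2c'|cx2] := ltP x2 c.
  by have [_ _ H2] := adm x2 x2I x2c'; exact: H2.
have e2 : x2 = c by apply/eqP; rewrite eq_le x2c cx2.
rewrite e2 in x12 *.
have [x1c|cx1] := ltP x1 c; last first.
  by have -> : x1 = c by apply/eqP; rewrite eq_le cx1 x12.
apply: (left_lim_ge cv x1c) => s /andP[x1s sc].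
have sI : s \in I by apply: (itv_conv x1I cI); apply: ltW.
have [_ _ H2] := adm s sI sc; exact: H2 x1 s x1I sI (ltW x1s) (lexx s).
Qed.

Lemma nilt_c_left c : c \in I -> has_left_pts I c -> left_cont_at I h c ->
  (forall x, x \in I -> x < c -> nilt_adm I h x) -> nilt_adm I h c.
Proof.
move=> cI hl lc adm; have cv := lc hl; have [a [aI ac]] := hl.
split => //.
  move=> t tI ct; apply: (left_lim_ge cv ac) => s /andP[aS sc].
  have sI : s \in I by apply: (itv_conv aI cI); apply: ltW.
  by have [_ H1 _] := adm s sI sc; apply: H1 => //; exact: lt_trans sc ct.
move=> x1 x2 x1I x2I x12 x2c.
have [x2c'|cx2] := ltP x2 c.
  by have [_ _ H2] := adm x2 x2I x2c'; exact: H2.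
have e2 : x2 = c by apply/eqP; rewrite eq_le x2c cx2.
rewrite e2 in x12 *.
have [x1c|cx1] := ltP x1 c; last first.
  by have -> : x1 = c by apply/eqP; rewrite eq_le cx1 x12.
apply: (left_lim_le cv x1c) => s /andP[x1s sc].
have sI : s \in I by apply: (itv_conv x1I cI); apply: ltW.
have [_ _ H2] := adm s sI sc; exact: H2 x1 s x1I sI (ltW x1s) (lexx s).
Qed.

End Adm.
Section ImgB.
Context {R : realType}.
Lemma sup_img_ub (h : R -> R) (A : set R) hs x :
  hs%:E = ereal_sup (EFin @` [set h x | x in A]) -> A x -> h x <= hs.
Proof.
move=> e Ax; rewrite -lee_fin e; apply: ereal_sup_ubound.
by exists (h x) => //; exists x.
Qed.
Lemma inf_img_lb (h : R -> R) (A : set R) hs x :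
  hs%:E = ereal_inf (EFin @` [set h x | x in A]) -> A x -> hs <= h x.
Proof.
move=> e Ax; rewrite -lee_fin e; apply: ereal_inf_lbound.
by exists (h x) => //; exists x.
Qed.
End ImgB.
Arguments itv_interior {R I c}.
Arguments sup_img_ub {R h A hs x}.
Arguments inf_img_lb {R h A hs x}.
Arguments ndut_inf {R I h c x}.
Arguments niut_inf {R I h c x}.
Arguments ndlt_sup {R I h c x}.
Arguments nilt_sup {R I h c x}.
Arguments ndut_c_right {R I h c}.
Arguments niut_c_right {R I h c}.
Arguments ndlt_c_left {R I h c}.
Arguments nilt_c_left {R I h c}.

Section Main.
Context {R : realType} {d : measure_display} {T : measurableType d}.
Variables (P : probability T R) (X : T -> R) (I : interval R).
Hypotheses (mX : measurable_fun setT X) (XI : forall w, X w \in I).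
Local Notation F := (rv_cdf P X).
Local Notation Pr := (Pr P).

Lemma mhgt (h : R -> R) y : jump_fun I h -> measurable [set w | y < h (X w)].
Proof.
move=> hj.
rewrite (_ : [set w | y < h (X w)] = setT `&` X @^-1` [set x | x \in I /\ y < h x]).
  by apply: mX => //; exact: jump_meas_gt.
rewrite setTI; apply/seteqP; split => w /=; last by case.
by move=> hy; split => //; exact: XI.
Qed.

Lemma mhle (h : R -> R) y : jump_fun I h -> measurable [set w | h (X w) <= y].
Proof.
move=> hj; rewrite (_ : [set w | h (X w) <= y] = ~` [set w | y < h (X w)]).
  by apply: measurableC; exact: mhgt.
apply/seteqP; split => w /=; first by rewrite ltNge => ->.
by move/negP; rewrite -leNgt.
Qed.

Lemma mhge (h : R -> R) y : jump_fun I h -> measurable [set w | y <= h (X w)].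
Proof.
move=> hj.
rewrite (_ : [set w | y <= h (X w)] = \bigcap_n [set w | y - n.+1%:R^-1 < h (X w)]).
  by apply: bigcap_measurable => [|n _]; [exists 0%N | exact: mhgt].
apply/seteqP; split => w /=.
  move=> yh n _ /=; apply: lt_le_trans yh; rewrite ltrBlDr ltrDl invr_gt0 //.
move=> Hw; rewrite leNgt; apply/negP => hy.
have e0 : 0 < y - h (X w) by rewrite subr_gt0.
have := Hw (Num.truncn ((y - h (X w))^-1)) Logic.I; rewrite /=.
have h2 : (Num.truncn (y - h (X w))^-1).+1%:R^-1 < y - h (X w).
  by rewrite invf_plt ?posrE // Num.Theory.truncnS_gt.
move: h2; set k := (_.+1%:R^-1); move=> h2; lra.
Qed.

Lemma cdfG (h : R -> R) y : rv_cdf P (h \o X) y = Pr [set w | h (X w) <= y].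
Proof. by []. Qed.

Lemma q_le_sup q p : (forall x, x < q -> F x <= p) -> p < 1 ->
  exists2 y, y \in I & q <= y.
Proof.
move=> H p1; apply/not_exists2P => Hn.
have Hy y : y \in I -> y < q.
  move=> yI; rewrite ltNge; apply/negP => qy.
  by case: (Hn y) => Hc; [exact: Hc yI | exact: Hc qy].
have := cdf_left P X mX q p H.
rewrite (_ : [set w | X w < q] = setT); first by rewrite Pr_setT; lra.
by apply/seteqP; split => w //= _; apply: Hy.
Qed.

Lemma q_ge_inf q p : 0 < p -> p <= F q -> exists2 y, y \in I & y <= q.
Proof.
move=> p0 Fq; apply/not_exists2P => Hn.
have Hy y : y \in I -> q < y.
  move=> yI; rewrite ltNge; apply/negP => qy.
  by case: (Hn y) => Hc; [exact: Hc yI | exact: Hc qy].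
move: Fq; rewrite cdfE (_ : [set w | X w <= q] = set0); first by rewrite Pr_set0; lra.
apply/seteqP; split => w //= Xq; have := Hy _ (XI w); rewrite ltNge Xq.
by [].
Qed.



Lemma partA1 (h : R -> R) c hs : jump_fun I h ->
  c%:E = ereal_inf (EFin @` [set x' | ndut_adm I h x']) ->
  (inf_I I < c%:E)%E -> (c%:E < sup_I I)%E ->
  hs%:E = ereal_sup (EFin @` [set h x | x in [set x | x \in I /\ x < c]]) ->
  left_cont I h -> forall p, 0 < p < 1 -> Pr [set w | h (X w) <= hs] < p ->
  exists q, qlow F p = q%:E /\ qlow (rv_cdf P (h \o X)) p = (h q)%:E.
Proof.
move=> hj ce infc csup hse hlc p /andP[p0 p1] pip.
have [cI cl cr] := itv_interior infc csup.
have hsub x : x \in I -> x < c -> h x <= hs.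
  by move=> xI xc; apply: (sup_img_ub hse).
have hc : h c <= hs.
  have [a [aI ac]] := cl.
  apply: (left_lim_le (hlc c cI cl) ac) => s /andP[aS sc].
  by apply: hsub => //; apply: (itv_conv aI cI); apply: ltW.
have Fc : F c <= Pr [set w | h (X w) <= hs].
  apply: Pr_mono; [exact: measX_le | exact: mhle | ].
  move=> w /= Xc; have [Xc'|Xc'] := ltP (X w) c; first exact: hsub.
  by have -> : X w = c by apply/eqP; rewrite eq_le Xc Xc'.
have [q [qe Fq Fltq]] := @qlow_ex R d T P X mX p (ltac:(by rewrite p0 p1)).
have cq : c < q.
  rewrite ltNge; apply/negP => qc.
  have := le_trans Fq (le_trans (cdf_mono P X mX _ _ qc) Fc); lra.
have [y yI qy] := q_le_sup q p (fun x xq => ltW (Fltq x xq)) p1.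
have qI : q \in I by apply: (itv_conv cI yI) => //; exact: ltW.
have [_ aq1 aq2] := ndut_inf ce qI cq.
exists q; split => //.
apply: qlow_char.
  rewrite cdfG; apply: le_trans Fq _; apply: Pr_mono; [exact: measX_le|exact: mhle|].
  move=> w /= Xq; have [Xq'|Xq'] := ltP (X w) q; first exact: aq1.
  by have -> : X w = q by apply/eqP; rewrite eq_le Xq Xq'.
move=> z zq.
have ql : has_left_pts I q by exists c.
have [a aq Ha] := left_gt (hlc q qI ql) zq.
rewrite cdfG; apply: le_lt_trans (Fltq a aq).
apply: Pr_mono; [exact: mhle|exact: measX_le|].
move=> w /= hz; rewrite leNgt; apply/negP => aX.
have [Xq|qX] := ltP (X w) q.
  by have := Ha (X w) ltac:(by rewrite (ltW aX) Xq); rewrite ltNge hz.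
have := aq2 q (X w) qI (XI w) (lexx q) qX.
by move=> /(lt_le_trans zq); rewrite ltNge hz.
Qed.



Lemma partA2 (h : R -> R) c hs : jump_fun I h ->
  c%:E = ereal_inf (EFin @` [set x' | ndut_adm I h x']) ->
  (inf_I I < c%:E)%E -> (c%:E < sup_I I)%E ->
  hs%:E = ereal_sup (EFin @` [set h x | x in [set x | x \in I /\ x < c]]) ->
  right_cont I h -> forall p, 0 < p < 1 -> Pr [set w | h (X w) <= hs] <= p ->
  exists q, qup F p = q%:E /\ qup (rv_cdf P (h \o X)) p = (h q)%:E.
Proof.
move=> hj ce infc csup hse hrc p /andP[p0 p1] pip.
have [cI cl cr] := itv_interior infc csup.
have hsub x : x \in I -> x < c -> h x <= hs.
  by move=> xI xc; apply: (sup_img_ub hse).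
have [q [qe Fle Fgt]] := @qup_ex R d T P X mX p (ltac:(by rewrite p0 p1)).
have cq : c <= q.
  rewrite leNgt; apply/negP => qc.
  have : F ((q + c) / 2) <= Pr [set w | h (X w) <= hs].
    apply: Pr_mono; [exact: measX_le | exact: mhle | ].
    move=> w /= Xc; apply: hsub; [exact: XI | lra].
  have := Fgt ((q + c) / 2) ltac:(lra); lra.
have [y yI qy] := q_le_sup q p Fle p1.
have qI : q \in I by apply: (itv_conv cI yI).
have [_ aq1 aq2] : ndut_adm I h q.
  have [cq'|qc] := ltP c q; first exact: ndut_inf ce qI cq'.
  have -> : q = c by apply/eqP; rewrite eq_le cq qc.
  apply: (ndut_c_right cI cr (hrc c cI)) => x xI cx; exact: ndut_inf ce xI cx.
exists q; split => //.
apply: qup_char.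
  move=> z zq; rewrite cdfG; apply: le_trans (cdf_left P X mX q p Fle).
  apply: Pr_mono; [exact: mhle|exact: measX_lt|].
  move=> w /= hz; rewrite ltNge; apply/negP => qX.
  have := aq2 q (X w) qI (XI w) (lexx q) qX; lra.
move=> z zq.
have [b qb Hb] : exists2 b, q < b & forall t, t \in I -> q < t <= b -> h t < z.
  have [hr|nhr] := pselect (has_right_pts I q).
    by have [b qb Hb] := right_lt (hrc q qI hr) zq; exists b => // t _; exact: Hb.
  exists (q + 1); first lra.
  by move=> t tI /andP[qt _]; exfalso; apply: nhr; exists t.
rewrite cdfG; apply: lt_le_trans (Fgt b qb) _.
apply: Pr_mono; [exact: measX_le|exact: mhle|].
move=> w /= Xb; have [Xq|qX] := leP (X w) q.
  apply: ltW; apply: le_lt_trans zq.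
  have [Xq'|Xq'] := ltP (X w) q; first exact: aq1.
  by have -> : X w = q by apply/eqP; rewrite eq_le Xq Xq'.
by apply: ltW; apply: Hb; [exact: XI | rewrite qX Xb].
Qed.

Lemma partB1 (g : R -> R) c gs : jump_fun I g ->
  c%:E = ereal_inf (EFin @` [set x' | niut_adm I g x']) ->
  (inf_I I < c%:E)%E -> (c%:E < sup_I I)%E ->
  gs%:E = ereal_inf (EFin @` [set g x | x in [set x | x \in I /\ x < c]]) ->
  left_cont I g -> forall p, 0 < p < 1 -> p < 1 - Pr [set w | gs <= g (X w)] ->
  exists q, qlow F (1 - p) = q%:E /\ qup (rv_cdf P (g \o X)) p = (g q)%:E.
Proof.
move=> hj ce infc csup gse hlc p /andP[p0 p1] pl.
have [cI cl cr] := itv_interior infc csup.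
have gsub x : x \in I -> x < c -> gs <= g x.
  by move=> xI xc; apply: (inf_img_lb gse).
have gc : gs <= g c.
  have [a [aI ac]] := cl.
  apply: (left_lim_ge (hlc c cI cl) ac) => s /andP[aS sc].
  by apply: gsub => //; apply: (itv_conv aI cI); apply: ltW.
have Fc : F c <= Pr [set w | gs <= g (X w)].
  apply: Pr_mono; [exact: measX_le | exact: mhge | ].
  move=> w /= Xc; have [Xc'|Xc'] := ltP (X w) c; first exact: gsub.
  by have -> : X w = c by apply/eqP; rewrite eq_le Xc Xc'.
have [q [qe Fq Fltq]] := @qlow_ex R d T P X mX (1 - p) (ltac:(apply/andP; split; lra)).
have cq : c < q.
  rewrite ltNge; apply/negP => qc.
  have := le_trans Fq (le_trans (cdf_mono P X mX _ _ qc) Fc); lra.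
have [y yI qy] := q_le_sup q (1 - p) (fun x xq => ltW (Fltq x xq)) ltac:(lra).
have qI : q \in I by apply: (itv_conv cI yI) => //; exact: ltW.
have [_ aq1 aq2] := niut_inf ce qI cq.
exists q; split => //.
apply: qup_char.
  move=> z zq; rewrite cdfG.
  apply: (@le_trans _ _ (Pr [set w | q < X w])).
    apply: Pr_mono; [exact: mhle|exact: measX_gt|].
    move=> w /= hz; rewrite ltNge; apply/negP => Xq.
    have : g q <= g (X w).
      have [Xq'|Xq'] := ltP (X w) q; first exact: aq1.
      by have -> : X w = q by apply/eqP; rewrite eq_le Xq Xq'.
    lra.
  rewrite Pr_gt //; lra.
move=> z zq.
have ql : has_left_pts I q by exists c.
have [a aq Ha] := left_lt (hlc q qI ql) zq.
rewrite cdfG; apply: (@lt_le_trans _ _ (Pr [set w | a < X w])).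
  by rewrite Pr_gt //; have := Fltq a aq; lra.
apply: Pr_mono; [exact: measX_gt|exact: mhle|].
move=> w /= aX; have [Xq|qX] := ltP (X w) q.
  by apply: ltW; apply: Ha; rewrite (ltW aX) Xq.
have := aq2 q (X w) qI (XI w) (lexx q) qX; lra.
Qed.

Lemma partB2 (g : R -> R) c gs : jump_fun I g ->
  c%:E = ereal_inf (EFin @` [set x' | niut_adm I g x']) ->
  (inf_I I < c%:E)%E -> (c%:E < sup_I I)%E ->
  gs%:E = ereal_inf (EFin @` [set g x | x in [set x | x \in I /\ x < c]]) ->
  right_cont I g -> forall p, 0 < p < 1 -> p <= 1 - Pr [set w | gs <= g (X w)] ->
  exists q, qup F (1 - p) = q%:E /\ qlow (rv_cdf P (g \o X)) p = (g q)%:E.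
Proof.
move=> hj ce infc csup gse hrc p /andP[p0 p1] pl.
have [cI cl cr] := itv_interior infc csup.
have gsub x : x \in I -> x < c -> gs <= g x.
  by move=> xI xc; apply: (inf_img_lb gse).
have [q [qe Fle Fgt]] := @qup_ex R d T P X mX (1 - p) (ltac:(apply/andP; split; lra)).
have cq : c <= q.
  rewrite leNgt; apply/negP => qc.
  have : F ((q + c) / 2) <= Pr [set w | gs <= g (X w)].
    apply: Pr_mono; [exact: measX_le | exact: mhge | ].
    move=> w /= Xc; apply: gsub; [exact: XI | lra].
  have := Fgt ((q + c) / 2) ltac:(lra); lra.
have [y yI qy] := q_le_sup q (1 - p) Fle ltac:(lra).
have qI : q \in I by apply: (itv_conv cI yI).
have [_ aq1 aq2] : niut_adm I g q.
  have [cq'|qc] := ltP c q; first exact: niut_inf ce qI cq'.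
  have -> : q = c by apply/eqP; rewrite eq_le cq qc.
  apply: (niut_c_right cI cr (hrc c cI)) => x xI cx; exact: niut_inf ce xI cx.
exists q; split => //.
apply: qlow_char.
  rewrite cdfG; apply: (@le_trans _ _ (Pr [set w | q <= X w])).
    rewrite Pr_ge //; have := cdf_left P X mX q (1 - p) Fle; lra.
  apply: Pr_mono; [exact: measX_ge|exact: mhle|].
  by move=> w /= qX; exact: aq2 q (X w) qI (XI w) (lexx q) qX.
move=> z zq.
have [b qb Hb] : exists2 b, q < b & forall t, t \in I -> q < t <= b -> z < g t.
  have [hr|nhr] := pselect (has_right_pts I q).
    by have [b qb Hb] := right_gt (hrc q qI hr) zq; exists b => // t _; exact: Hb.
  exists (q + 1); first lra.
  by move=> t tI /andP[qt _]; exfalso; apply: nhr; exists t.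
rewrite cdfG; apply: (@le_lt_trans _ _ (Pr [set w | b < X w])).
  apply: Pr_mono; [exact: mhle|exact: measX_gt|].
  move=> w /= gz; rewrite ltNge; apply/negP => Xb.
  have [Xq|qX] := leP (X w) q.
    have : g q <= g (X w).
      have [Xq'|Xq'] := ltP (X w) q; first exact: aq1.
      by have -> : X w = q by apply/eqP; rewrite eq_le Xq Xq'.
    lra.
  have := Hb (X w) (XI w) ltac:(by rewrite qX Xb); lra.
by rewrite Pr_gt //; have := Fgt b qb; lra.
Qed.



Lemma partC1 (h : R -> R) c hs : jump_fun I h ->
  c%:E = ereal_sup (EFin @` [set x' | ndlt_adm I h x']) ->
  (inf_I I < c%:E)%E -> (c%:E < sup_I I)%E ->
  hs%:E = ereal_inf (EFin @` [set h x | x in [set x | x \in I /\ c < x]]) ->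
  left_cont I h -> forall p, 0 < p < 1 -> p <= 1 - Pr [set w | hs <= h (X w)] ->
  exists q, qlow F p = q%:E /\ qlow (rv_cdf P (h \o X)) p = (h q)%:E.
Proof.
move=> hj ce infc csup hse hlc p /andP[p0 p1] pl.
have [cI cl cr] := itv_interior infc csup.
have hsub x : x \in I -> c < x -> hs <= h x.
  by move=> xI xc; apply: (inf_img_lb hse).
have [q [qe Fq Fltq]] := @qlow_ex R d T P X mX p (ltac:(by rewrite p0 p1)).
have qc : q <= c.
  rewrite leNgt; apply/negP => cq.
  have : Pr [set w | c < X w] <= Pr [set w | hs <= h (X w)].
    apply: Pr_mono; [exact: measX_gt | exact: mhge | ].
    by move=> w /= cX; apply: hsub => //; exact: XI.
  rewrite Pr_gt //; have := Fltq c cq; lra.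
have [y yI yq] := q_ge_inf q p p0 Fq.
have qI : q \in I by apply: (itv_conv yI cI).
have [_ aq1 aq2] : ndlt_adm I h q.
  have [qc'|cq] := ltP q c; first exact: ndlt_sup ce qI qc'.
  have -> : q = c by apply/eqP; rewrite eq_le cq qc.
  apply: (ndlt_c_left cI cl (hlc c cI)) => x xI cx; exact: ndlt_sup ce xI cx.
exists q; split => //.
apply: qlow_char.
  rewrite cdfG; apply: le_trans Fq _; apply: Pr_mono; [exact: measX_le|exact: mhle|].
  by move=> w /= Xq; exact: aq2 (X w) q (XI w) qI Xq (lexx q).
move=> z zq.
have [a aq Ha] : exists2 a, a < q & forall t, t \in I -> a <= t < q -> z < h t.
  have [hl|nhl] := pselect (has_left_pts I q).
    by have [a aq Ha] := left_gt (hlc q qI hl) zq; exists a => // t _; exact: Ha.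
  exists (q - 1); first lra.
  by move=> t tI /andP[_ tq]; exfalso; apply: nhl; exists t.
rewrite cdfG; apply: le_lt_trans (Fltq a aq).
apply: Pr_mono; [exact: mhle|exact: measX_le|].
move=> w /= hz; rewrite leNgt; apply/negP => aX.
have [Xq|qX] := ltP (X w) q.
  have := Ha (X w) (XI w) ltac:(by rewrite (ltW aX) Xq); lra.
have : h q <= h (X w).
  have [qX'|qX'] := ltP q (X w); first exact: aq1.
  by have -> : X w = q by apply/eqP; rewrite eq_le qX qX'.
lra.
Qed.

Lemma partC2 (h : R -> R) c hs : jump_fun I h ->
  c%:E = ereal_sup (EFin @` [set x' | ndlt_adm I h x']) ->
  (inf_I I < c%:E)%E -> (c%:E < sup_I I)%E ->
  hs%:E = ereal_inf (EFin @` [set h x | x in [set x | x \in I /\ c < x]]) ->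
  right_cont I h -> forall p, 0 < p < 1 -> p < 1 - Pr [set w | hs <= h (X w)] ->
  exists q, qup F p = q%:E /\ qup (rv_cdf P (h \o X)) p = (h q)%:E.
Proof.
move=> hj ce infc csup hse hrc p /andP[p0 p1] pl.
have [cI cl cr] := itv_interior infc csup.
have hsub x : x \in I -> c < x -> hs <= h x.
  by move=> xI xc; apply: (inf_img_lb hse).
have hc : hs <= h c.
  have [b [bI cb]] := cr.
  apply: (right_lim_ge (hrc c cI cr) cb) => s /andP[cs sb].
  by apply: hsub => //; apply: (itv_conv cI bI); apply: ltW.
have Pc : Pr [set w | c <= X w] <= Pr [set w | hs <= h (X w)].
  apply: Pr_mono; [exact: measX_ge | exact: mhge | ].
  move=> w /= cX; have [cX'|cX'] := ltP c (X w); first by apply: hsub => //; exact: XI.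
  by have -> : X w = c by apply/eqP; rewrite eq_le cX cX'.
have [q [qe Fle Fgt]] := @qup_ex R d T P X mX p (ltac:(by rewrite p0 p1)).
have qc : q < c.
  rewrite ltNge; apply/negP => cq.
  have := cdf_left P X mX c p (fun x xc => Fle x (lt_le_trans xc cq)).
  move: Pc; rewrite Pr_ge //; lra.
have [y yI yq] := q_ge_inf q p p0 (cdf_right P X mX q p (fun x qx => ltW (Fgt x qx))).
have qI : q \in I by apply: (itv_conv yI cI) => //; exact: ltW.
have [_ aq1 aq2] := ndlt_sup ce qI qc.
exists q; split => //.
apply: qup_char.
  move=> z zq; rewrite cdfG; apply: le_trans (cdf_left P X mX q p Fle).
  apply: Pr_mono; [exact: mhle|exact: measX_lt|].
  move=> w /= hz; rewrite ltNge; apply/negP => qX.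
  have : h q <= h (X w).
    have [qX'|qX'] := ltP q (X w); first exact: aq1.
    by have -> : X w = q by apply/eqP; rewrite eq_le qX qX'.
  lra.
move=> z zq.
have qr : has_right_pts I q by exists c.
have [b qb Hb] := right_lt (hrc q qI qr) zq.
rewrite cdfG; apply: lt_le_trans (Fgt b qb) _.
apply: Pr_mono; [exact: measX_le|exact: mhle|].
move=> w /= Xb; have [Xq|qX] := leP (X w) q.
  have := aq2 (X w) q (XI w) qI Xq (lexx q); lra.
by apply: ltW; apply: Hb; rewrite qX Xb.
Qed.

Lemma partD1 (g : R -> R) c gs : jump_fun I g ->
  c%:E = ereal_sup (EFin @` [set x' | nilt_adm I g x']) ->
  (inf_I I < c%:E)%E -> (c%:E < sup_I I)%E ->
  gs%:E = ereal_sup (EFin @` [set g x | x in [set x | x \in I /\ c < x]]) ->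
  left_cont I g -> forall p, 0 < p < 1 -> Pr [set w | g (X w) <= gs] <= p ->
  exists q, qlow F (1 - p) = q%:E /\ qup (rv_cdf P (g \o X)) p = (g q)%:E.
Proof.
move=> hj ce infc csup gse hlc p /andP[p0 p1] pl.
have [cI cl cr] := itv_interior infc csup.
have gsub x : x \in I -> c < x -> g x <= gs.
  by move=> xI xc; apply: (sup_img_ub gse).
have [q [qe Fq Fltq]] := @qlow_ex R d T P X mX (1 - p) (ltac:(apply/andP; split; lra)).
have qc : q <= c.
  rewrite leNgt; apply/negP => cq.
  have : Pr [set w | c < X w] <= Pr [set w | g (X w) <= gs].
    apply: Pr_mono; [exact: measX_gt | exact: mhle | ].
    by move=> w /= cX; apply: gsub => //; exact: XI.
  rewrite Pr_gt //; have := Fltq c cq; lra.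
have [y yI yq] := q_ge_inf q (1 - p) ltac:(lra) Fq.
have qI : q \in I by apply: (itv_conv yI cI).
have [_ aq1 aq2] : nilt_adm I g q.
  have [qc'|cq] := ltP q c; first exact: nilt_sup ce qI qc'.
  have -> : q = c by apply/eqP; rewrite eq_le cq qc.
  apply: (nilt_c_left cI cl (hlc c cI)) => x xI cx; exact: nilt_sup ce xI cx.
exists q; split => //.
apply: qup_char.
  move=> z zq; rewrite cdfG.
  apply: (@le_trans _ _ (Pr [set w | q < X w])).
    apply: Pr_mono; [exact: mhle|exact: measX_gt|].
    move=> w /= gz; rewrite ltNge; apply/negP => Xq.
    have := aq2 (X w) q (XI w) qI Xq (lexx q); lra.
  rewrite Pr_gt //; lra.
move=> z zq.
have [a aq Ha] : exists2 a, a < q & forall t, t \in I -> a <= t < q -> g t < z.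
  have [hl|nhl] := pselect (has_left_pts I q).
    by have [a aq Ha] := left_lt (hlc q qI hl) zq; exists a => // t _; exact: Ha.
  exists (q - 1); first lra.
  by move=> t tI /andP[_ tq]; exfalso; apply: nhl; exists t.
rewrite cdfG; apply: (@lt_le_trans _ _ (Pr [set w | a < X w])).
  by rewrite Pr_gt //; have := Fltq a aq; lra.
apply: Pr_mono; [exact: measX_gt|exact: mhle|].
move=> w /= aX; have [Xq|qX] := ltP (X w) q.
  by apply: ltW; apply: Ha; [exact: XI | rewrite (ltW aX) Xq].
have : g (X w) <= g q.
  have [qX'|qX'] := ltP q (X w); first exact: aq1.
  by have -> : X w = q by apply/eqP; rewrite eq_le qX qX'.
lra.
Qed.

Lemma partD2 (g : R -> R) c gs : jump_fun I g ->
  c%:E = ereal_sup (EFin @` [set x' | nilt_adm I g x']) ->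
  (inf_I I < c%:E)%E -> (c%:E < sup_I I)%E ->
  gs%:E = ereal_sup (EFin @` [set g x | x in [set x | x \in I /\ c < x]]) ->
  right_cont I g -> forall p, 0 < p < 1 -> Pr [set w | g (X w) <= gs] < p ->
  exists q, qup F (1 - p) = q%:E /\ qlow (rv_cdf P (g \o X)) p = (g q)%:E.
Proof.
move=> hj ce infc csup gse hrc p /andP[p0 p1] pl.
have [cI cl cr] := itv_interior infc csup.
have gsub x : x \in I -> c < x -> g x <= gs.
  by move=> xI xc; apply: (sup_img_ub gse).
have gc : g c <= gs.
  have [b [bI cb]] := cr.
  apply: (right_lim_le (hrc c cI cr) cb) => s /andP[cs sb].
  by apply: gsub => //; apply: (itv_conv cI bI); apply: ltW.
have Pc : Pr [set w | c <= X w] <= Pr [set w | g (X w) <= gs].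
  apply: Pr_mono; [exact: measX_ge | exact: mhle | ].
  move=> w /= cX; have [cX'|cX'] := ltP c (X w); first by apply: gsub => //; exact: XI.
  by have -> : X w = c by apply/eqP; rewrite eq_le cX cX'.
have [q [qe Fle Fgt]] := @qup_ex R d T P X mX (1 - p) (ltac:(apply/andP; split; lra)).
have qc : q < c.
  rewrite ltNge; apply/negP => cq.
  have := cdf_left P X mX c (1 - p) (fun x xc => Fle x (lt_le_trans xc cq)).
  move: Pc; rewrite Pr_ge //; lra.
have [y yI yq] := q_ge_inf q (1 - p) ltac:(lra) (cdf_right P X mX q (1 - p) (fun x qx => ltW (Fgt x qx))).
have qI : q \in I by apply: (itv_conv yI cI) => //; exact: ltW.
have [_ aq1 aq2] := nilt_sup ce qI qc.
exists q; split => //.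
apply: qlow_char.
  rewrite cdfG; apply: (@le_trans _ _ (Pr [set w | q <= X w])).
    rewrite Pr_ge //; have := cdf_left P X mX q (1 - p) Fle; lra.
  apply: Pr_mono; [exact: measX_ge|exact: mhle|].
  move=> w /= qX; have [qX'|qX'] := ltP q (X w); first exact: aq1.
  by have -> : X w = q by apply/eqP; rewrite eq_le qX qX'.
move=> z zq.
have qr : has_right_pts I q by exists c.
have [b qb Hb] := right_gt (hrc q qI qr) zq.
rewrite cdfG; apply: (@le_lt_trans _ _ (Pr [set w | b < X w])).
  apply: Pr_mono; [exact: mhle|exact: measX_gt|].
  move=> w /= gz; rewrite ltNge; apply/negP => Xb.
  have [Xq|qX] := leP (X w) q.
    have := aq2 (X w) q (XI w) qI Xq (lexx q); lra.
  have := Hb (X w) ltac:(by rewrite qX Xb); lra.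
by rewrite Pr_gt //; have := Fgt b qb; lra.
Qed.

End Main.

Theorem theorem3p2 (d : measure_display) (T : measurableType d) (R : realType)
  (P : probability T R) (X : T -> R) (mX : measurable_fun setT X)
  (I : interval R) (XI : forall w, X w \in I) :
  (* (A) non-decreasing upper tail *)
  (forall (h : R -> R) (c hs : R),
     jump_fun I h ->
     (exists x', ndut_adm I h x') ->
     c%:E = ereal_inf (EFin @` [set x' | ndut_adm I h x']) ->
     (inf_I I < c%:E)%E -> (c%:E < sup_I I)%E ->
     hs%:E = ereal_sup (EFin @` [set h x | x in [set x | x \in I /\ x < c]]) ->
     let pi := fine (P [set w | h (X w) <= hs]) in
     (left_cont I h -> forall p, 0 < p < 1 -> pi < p ->
        exists q, qlow (rv_cdf P X) p = q%:E /\
                  qlow (rv_cdf P (h \o X)) p = (h q)%:E) /\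
     (right_cont I h -> forall p, 0 < p < 1 -> pi <= p ->
        exists q, qup (rv_cdf P X) p = q%:E /\
                  qup (rv_cdf P (h \o X)) p = (h q)%:E)) /\
  (* (B) non-increasing upper tail *)
  (forall (g : R -> R) (c gs : R),
     jump_fun I g ->
     (exists x', niut_adm I g x') ->
     c%:E = ereal_inf (EFin @` [set x' | niut_adm I g x']) ->
     (inf_I I < c%:E)%E -> (c%:E < sup_I I)%E ->
     gs%:E = ereal_inf (EFin @` [set g x | x in [set x | x \in I /\ x < c]]) ->
     let lam := fine (P [set w | gs <= g (X w)]) in
     (left_cont I g -> forall p, 0 < p < 1 -> p < 1 - lam ->
        exists q, qlow (rv_cdf P X) (1 - p) = q%:E /\
                  qup (rv_cdf P (g \o X)) p = (g q)%:E) /\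
     (right_cont I g -> forall p, 0 < p < 1 -> p <= 1 - lam ->
        exists q, qup (rv_cdf P X) (1 - p) = q%:E /\
                  qlow (rv_cdf P (g \o X)) p = (g q)%:E)) /\
  (* (C) non-decreasing lower tail *)
  (forall (h : R -> R) (c hs : R),
     jump_fun I h ->
     (exists x', ndlt_adm I h x') ->
     c%:E = ereal_sup (EFin @` [set x' | ndlt_adm I h x']) ->
     (inf_I I < c%:E)%E -> (c%:E < sup_I I)%E ->
     hs%:E = ereal_inf (EFin @` [set h x | x in [set x | x \in I /\ c < x]]) ->
     let lam := fine (P [set w | hs <= h (X w)]) in
     (left_cont I h -> forall p, 0 < p < 1 -> p <= 1 - lam ->
        exists q, qlow (rv_cdf P X) p = q%:E /\
                  qlow (rv_cdf P (h \o X)) p = (h q)%:E) /\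
     (right_cont I h -> forall p, 0 < p < 1 -> p < 1 - lam ->
        exists q, qup (rv_cdf P X) p = q%:E /\
                  qup (rv_cdf P (h \o X)) p = (h q)%:E)) /\
  (* (D) non-increasing lower tail *)
  (forall (g : R -> R) (c gs : R),
     jump_fun I g ->
     (exists x', nilt_adm I g x') ->
     c%:E = ereal_sup (EFin @` [set x' | nilt_adm I g x']) ->
     (inf_I I < c%:E)%E -> (c%:E < sup_I I)%E ->
     gs%:E = ereal_sup (EFin @` [set g x | x in [set x | x \in I /\ c < x]]) ->
     let pi := fine (P [set w | g (X w) <= gs]) in
     (left_cont I g -> forall p, 0 < p < 1 -> pi <= p ->
        exists q, qlow (rv_cdf P X) (1 - p) = q%:E /\
                  qup (rv_cdf P (g \o X)) p = (g q)%:E) /\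
     (right_cont I g -> forall p, 0 < p < 1 -> pi < p ->
        exists q, qup (rv_cdf P X) (1 - p) = q%:E /\
                  qlow (rv_cdf P (g \o X)) p = (g q)%:E)).
Proof.
split; [|split; [|split]].
- move=> h c hs hj _ ce infc csup hse pi; split.
  + by move=> hlc p pp pip; exact: (@partA1 _ _ _ P X I mX XI h c hs hj ce infc csup hse hlc p pp pip).
  + by move=> hrc p pp pip; exact: (@partA2 _ _ _ P X I mX XI h c hs hj ce infc csup hse hrc p pp pip).
- move=> g c gs gj _ ce infc csup gse lam; split.
  + by move=> hlc p pp pip; exact: (@partB1 _ _ _ P X I mX XI g c gs gj ce infc csup gse hlc p pp pip).
  + by move=> hrc p pp pip; exact: (@partB2 _ _ _ P X I mX XI g c gs gj ce infc csup gse hrc p pp pip).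
- move=> h c hs hj _ ce infc csup hse lam; split.
  + by move=> hlc p pp pip; exact: (@partC1 _ _ _ P X I mX XI h c hs hj ce infc csup hse hlc p pp pip).
  + by move=> hrc p pp pip; exact: (@partC2 _ _ _ P X I mX XI h c hs hj ce infc csup hse hrc p pp pip).
- move=> g c gs gj _ ce infc csup gse pi; split.
  + by move=> hlc p pp pip; exact: (@partD1 _ _ _ P X I mX XI g c gs gj ce infc csup gse hlc p pp pip).
  + by move=> hrc p pp pip; exact: (@partD2 _ _ _ P X I mX XI g c gs gj ce infc csup gse hrc p pp pip).
Qed.
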